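(* Let $A_0\in\mathbb{R}^{n\times n}$, $B\in\mathbb{R}^{n\times1}$, $K\in\mathbb{R}^{1\times n}$, $h\in\mathbb{R}$, $P_0\in\mathbb{R}^{n\times n}$ symmetric, and let $V(x)=\tfrac12\big(x^\top P_0x+h(x^\top K^\top Kx-\mathrm{dz}(Kx)^2)\big)$. Suppose the matching condition $P_0B-hA_0^\top K^\top=\mu K^\top$ holds for some $\mu\ge0$, and that $2\mu+\omega>0$ where $\omega:=2hKB$. Then, with $S_0:=-(A_0^\top P_0+P_0A_0)$, the directional derivative of $V$ along $\dot x=A_0x-B\,\mathrm{sat}(Kx)$ satisfies, for almost all $x\in\mathbb{R}^n$, $$\dot V(x)=-\tfrac12\begin{bmatrix}x\\ \mathrm{dz}(Kx)\end{bmatrix}^\top Q\begin{bmatrix}x\\ \mathrm{dz}(Kx)\end{bmatrix},\qquad Q=\begin{bmatrix}S_0+(2\mu+\omega)K^\top K&-(\mu+\omega)K^\top\\ -(\mu+\omega)K&\omega\end{bmatrix}.$$ Moreover, if in addition $P_0\succeq0$, $A_0^\top P_0+P_0A_0\preceq0$ and $\ker P_0\subseteq\ker A_0$, then there exist $T_0\ge0$ and $R>0$ such that $\tfrac12 Q-\Sigma_0-\Sigma_R\succeq0$; in particular $-\dot V(x)\ge R\,\mathrm{sat}(Kx)^2$ for almost all $x$.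
   Context: Single-input case: $\mathrm{sat}(s)=\min\{\overline{u},\max\{-\underline{u},s\}\}$ with $\overline{u},\underline{u}>0$, $\mathrm{dz}(s)=s-\mathrm{sat}(s)$. For scalars $T_0,R$: $\Sigma_0=\begin{bmatrix}0&K^\top T_0\\ T_0K&-2T_0\end{bmatrix}$, $\Sigma_R=\begin{bmatrix}K^\top RK&-K^\top R\\ -RK&R\end{bmatrix}$. *)

(* Defs.v *)
From HB Require Import structures.
From mathcomp Require Import all_boot all_order all_algebra.
From mathcomp Require Import all_classical all_reals all_analysis.
Set Implicit Arguments. Unset Strict Implicit. Unset Printing Implicit Defensive.
Import Order.TTheory GRing.Theory Num.Theory.
Import numFieldNormedType.Exports.
Local Open Scope ring_scope.

Section Defs.
Variable R : realType.

Definition sat (ub lb s : R) : R := Num.min ub (Num.max (- lb) s).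
Definition dz (ub lb s : R) : R := s - sat ub lb s.

Definition sc {n} (K : 'rV[R]_n) (x : 'cV[R]_n) : R := (K *m x) ord0 ord0.

Definition quad {m} (M : 'M[R]_m) (z : 'cV[R]_m) : R := (z^T *m M *m z) ord0 ord0.

Definition psd {m} (M : 'M[R]_m) : Prop := forall z : 'cV[R]_m, 0 <= quad M z.

Definition ker_sub {n} (M1 M2 : 'M[R]_n) : Prop :=
  forall v : 'cV[R]_n, M1 *m v = 0 -> M2 *m v = 0.

Definition dirder {n} (V : 'cV[R]_n -> R) (x v : 'cV[R]_n) : R :=
  derive (fun t : R => V (x + t *: v)) 0 1.
Definition dirderivable {n} (V : 'cV[R]_n -> R) (x v : 'cV[R]_n) : Prop :=
  derivable (fun t : R => V (x + t *: v)) 0 1.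

Definition Vfun {n} (ub lb h : R) (P0 : 'M[R]_n) (K : 'rV[R]_n) (x : 'cV[R]_n) : R :=
  (1/2) * (quad P0 x + h * (quad (K^T *m K) x - (dz ub lb (sc K x)) ^+ 2)).

Definition field {n} (ub lb : R) (A0 : 'M[R]_n) (B : 'cV[R]_n) (K : 'rV[R]_n)
  (x : 'cV[R]_n) : 'cV[R]_n := A0 *m x - sat ub lb (sc K x) *: B.

Definition omega {n} (h : R) (K : 'rV[R]_n) (B : 'cV[R]_n) : R := 2 * h * sc K B.

Definition S0 {n} (A0 P0 : 'M[R]_n) : 'M[R]_n := - (A0^T *m P0 + P0 *m A0).

Definition Qmat {n} (A0 P0 : 'M[R]_n) (K : 'rV[R]_n) (mu w : R) : 'M[R]_(n + 1) :=
  block_mx (S0 A0 P0 + (2 * mu + w) *: (K^T *m K)) (- (mu + w) *: K^T)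
           (- (mu + w) *: K) (w%:M).

Definition Sigma0 {n} (K : 'rV[R]_n) (T0 : R) : 'M[R]_(n + 1) :=
  block_mx 0 (K^T *m T0%:M) (T0%:M *m K) ((-2 * T0)%:M).

Definition SigmaR {n} (K : 'rV[R]_n) (Rr : R) : 'M[R]_(n + 1) :=
  block_mx (K^T *m Rr%:M *m K) (- (K^T *m Rr%:M)) (- (Rr%:M *m K)) (Rr%:M).

Definition zvec {n} (ub lb : R) (K : 'rV[R]_n) (x : 'cV[R]_n) : 'cV[R]_(n + 1) :=
  col_mx x (dz ub lb (sc K x))%:M.

End Defs.

(* Main.v *)
Require Import Defs.
From HB Require Import structures.
From mathcomp Require Import all_boot all_order all_algebra.
From mathcomp Require Import all_classical all_reals all_analysis.
From mathcomp Require Import ring lra.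
Import Order.TTheory GRing.Theory Num.Theory.
Import numFieldNormedType.Exports.
Local Open Scope ring_scope.
Section BD.
Local Open Scope classical_set_scope.

Lemma bound_derive (R : realType) (f : R -> R) (D C : R) :
  (forall t, `|f t - f 0 - D * t| <= C * t ^+ 2) ->
  derivable f 0 1 /\ derive f 0 1 = D.
Proof.
move=> Hb.
have C0 : 0 <= C.
  have H := Hb 1; rewrite expr1n !mulr1 in H.
  exact: le_trans (normr_ge0 _) H.
have Hc : (fun h => h^-1 *: ((f \o shift 0) (h *: 1) - f 0)) @ 0^' --> D.
  apply/cvgrPdist_le => e e0.
  have ec : 0 < e / (C + 1) by apply: divr_gt0 => //; lra.
  near=> t.
  have tn0 : t != 0 by near: t; exact: nbhs_dnbhs_neq.
  have tl : `|t| < e / (C + 1).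
    near: t; apply: (@nbhs_dnbhs R 0).
    exists (e / (C + 1)) => // y; by rewrite /ball /= sub0r normrN.
  have -> : (f \o shift 0) t%:A = f t.
    rewrite /= /shift addr0; congr f; exact: mulr1.
  rewrite -[_ *: _]/(t^-1 * (f t - f 0)).
  have -> : D - t^-1 * (f t - f 0) = - (t^-1 * (f t - f 0 - D * t)).
    by field.
  rewrite normrN normrM normrV ?unitfE //.
  have Ht := Hb t.
  have ta : 0 < `|t| by rewrite normr_gt0.
  rewrite ler_pdivrMl //.
  apply: (le_trans Ht).
  rewrite -real_normK ?num_real // .
  have : `|t| * (C + 1) < e by rewrite -ltr_pdivlMr //; lra.
  nra.
split; first by apply/cvg_ex; exists D.
exact: cvg_lim.
Unshelve. all: by end_near.
Qed.
End BD.
Lemma dz_cases (R : realType) (ub lb y : R) : 0 < ub -> 0 < lb ->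
  (y <= - lb /\ dz ub lb y = y + lb /\ sat ub lb y = - lb) \/
  (- lb <= y <= ub /\ dz ub lb y = 0 /\ sat ub lb y = y) \/
  (ub <= y /\ dz ub lb y = y - ub /\ sat ub lb y = ub).
Proof.
move=> hu hl; rewrite /dz /sat.
have [h1|h1] := lerP y (- lb).
  rewrite (min_r); last by lra.
  left; split => //; split => //; lra.
have [h2|h2] := lerP y ub.
  right; left; split; first by apply/andP; split; lra.
  by split => //; rewrite subrr.
by right; right; split => //; lra.
Qed.

Lemma dz_bound (R : realType) (ub lb y t : R) : 0 < ub -> 0 < lb ->
  `|dz ub lb (y + t) ^+ 2 - dz ub lb y ^+ 2 - 2 * dz ub lb y * t| <= t ^+ 2.
Proof.
move=> hu hl.
have := @dz_cases R ub lb y hu hl; have := @dz_cases R ub lb (y + t) hu hl.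
rewrite ler_norml.
move=> [[a [-> _]]|[[/andP [a1 a2] [-> _]]|[a [-> _]]]]
       [[b [-> _]]|[[/andP [b1 b2] [-> _]]|[b [-> _]]]];
  apply/andP; split; nra.
Qed.
Section M.
Variable R : realType.
Variable n : nat.
Implicit Types (u w x v : 'cV[R]_n) (M N : 'M[R]_n) (K : 'rV[R]_n).

Definition bil M u w : R := (u^T *m M *m w) ord0 ord0.

Lemma m11 (A B : 'M[R]_1) : (A *m B) ord0 ord0 = A ord0 ord0 * B ord0 ord0.
Proof. by rewrite mxE big_ord1. Qed.

Lemma tr11 (A : 'M[R]_1) : A^T ord0 ord0 = A ord0 ord0.
Proof. by rewrite mxE. Qed.

Lemma bil_tr M u w : bil M u w = bil M^T w u.
Proof. by rewrite /bil -tr11 !trmx_mul trmxK mulmxA. Qed.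

Lemma bil_KK K u w : bil (K^T *m K) u w = sc K u * sc K w.
Proof. by rewrite /bil /sc mulmxA -trmx_mul -mulmxA m11 tr11. Qed.

Lemma bil_mul M N u w : (u^T *m (M *m N) *m w) ord0 ord0 = bil M u (N *m w).
Proof. by rewrite /bil !mulmxA. Qed.

Lemma bil_trmul M N u w : (u^T *m (M^T *m N) *m w) ord0 ord0 = bil N (M *m u) w.
Proof. by rewrite /bil !mulmxA trmx_mul. Qed.

Lemma bilDl M u1 u2 w : bil M (u1 + u2) w = bil M u1 w + bil M u2 w.
Proof. by rewrite /bil linearD /= !mulmxDl mxE. Qed.
Lemma bilDr M u w1 w2 : bil M u (w1 + w2) = bil M u w1 + bil M u w2.
Proof. by rewrite /bil !mulmxDr mxE. Qed.
Lemma bilZl M c u w : bil M (c *: u) w = c * bil M u w.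
Proof. by rewrite /bil linearZ /= -!scalemxAl mxE. Qed.
Lemma bilZr M c u w : bil M u (c *: w) = c * bil M u w.
Proof. by rewrite /bil -!scalemxAr mxE. Qed.
Lemma bilNr M u w : bil M u (- w) = - bil M u w.
Proof. by rewrite -scaleN1r bilZr mulN1r. Qed.
Lemma bilNl M u w : bil M (- u) w = - bil M u w.
Proof. by rewrite -scaleN1r bilZl mulN1r. Qed.
Lemma scD K u w : sc K (u + w) = sc K u + sc K w.
Proof. by rewrite /sc mulmxDr mxE. Qed.
Lemma scZ K c u : sc K (c *: u) = c * sc K u.
Proof. by rewrite /sc -scalemxAr mxE. Qed.
Lemma scN K u : sc K (- u) = - sc K u.
Proof. by rewrite -scaleN1r scZ mulN1r. Qed.
End M.
Arguments bil {R n}.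

Lemma Vfun_der (R : realType) (n : nat) (ub lb h : R) (P0 : 'M[R]_n) (K : 'rV[R]_n) (x v : 'cV[R]_n) :
  0 < ub -> 0 < lb ->
  dirderivable (Vfun ub lb h P0 K) x v /\
  dirder (Vfun ub lb h P0 K) x v =
   (1/2) * (bil P0 x v + bil P0 v x + h * (2 * sc K x * sc K v - 2 * dz ub lb (sc K x) * sc K v)).
Proof.
move=> hu hl.
set s := sc K x; set k := sc K v; set d := dz ub lb s.
set D := (1/2) * _.
have Hf : forall t, Vfun ub lb h P0 K (x + t *: v) =
   (1/2) * (bil P0 x x + t * (bil P0 x v + bil P0 v x) + t ^+ 2 * bil P0 v v
     + h * ((s + t * k) ^+ 2 - dz ub lb (s + t * k) ^+ 2)).
  move=> t; rewrite /Vfun /quad -/(bil _ _ _) -/(bil _ _ _) bil_KK scD scZ -/s -/k.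
  rewrite !(bilDl, bilDr, bilZl, bilZr); congr (_ * _); ring.
have := @bound_derive R (fun t => Vfun ub lb h P0 K (x + t *: v)) D
  ((1/2) * (`|bil P0 v v| + 2 * `|h| * k ^+ 2)).
case.
- move=> t; rewrite !Hf !mul0r !addr0 expr0n /= mul0r addr0 -/d.
  have He := @dz_bound R ub lb s (t * k) hu hl; rewrite -/d in He.
  set e := _ - _ - _ in He.
  have -> : 1 / 2 * (bil P0 x x + t * (bil P0 x v + bil P0 v x) + t ^+ 2 * bil P0 v v +
     h * ((s + t * k) ^+ 2 - dz ub lb (s + t * k) ^+ 2)) -
    1 / 2 * (bil P0 x x + h * (s ^+ 2 - d ^+ 2)) - D * t =
    1/2 * (t ^+ 2 * bil P0 v v + h * t ^+ 2 * k ^+ 2 - h * e).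
    by rewrite /D /e; ring.
  move: He; generalize e (bil P0 v v) => e0 a.
  rewrite !ler_norml => /andP [e1 e2].
  have q1 := ler_norm a; have q2 := ler_normr a.
  have t2 : 0 <= t ^+ 2 by rewrite sqr_ge0.
  have [a0|a0] := ger0P a; have [h0|h0] := ger0P h; apply/andP; split; nra.
- by move=> H1 H2; split.
Qed.

Section Q.
Variable R : realType.
Variable n : nat.
Lemma e00D (A B : 'M[R]_1) : (A + B) ord0 ord0 = A ord0 ord0 + B ord0 ord0.
Proof. by rewrite mxE. Qed.
Lemma e00Z c (A : 'M[R]_1) : (c *: A) ord0 ord0 = c * A ord0 ord0.
Proof. by rewrite mxE. Qed.
Lemma e00N (A : 'M[R]_1) : (- A) ord0 ord0 = - A ord0 ord0.
Proof. by rewrite mxE. Qed.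
Lemma e00s c : (c%:M : 'M[R]_1) ord0 ord0 = c.
Proof. by rewrite mxE. Qed.

Lemma quad_block (A : 'M[R]_n) (b : 'cV[R]_n) (c : 'rV[R]_n) (e : R) x d :
  quad (block_mx A b c e%:M) (col_mx x d%:M) =
  bil A x x + d * (x^T *m b) ord0 ord0 + d * (c *m x) ord0 ord0 + d * e * d.
Proof.
rewrite /quad tr_col_mx mul_row_block mul_row_col !mulmxDl tr_scalar_mx.
rewrite !mul_scalar_mx !mul_mx_scalar !e00D !e00Z -scalemxAl !e00Z e00s.
rewrite /bil; ring.
Qed.

Lemma bilMD (M N : 'M[R]_n) u w : bil (M + N) u w = bil M u w + bil N u w.
Proof. by rewrite /bil mulmxDr mulmxDl e00D. Qed.
Lemma bilMZ c (M : 'M[R]_n) u w : bil (c *: M) u w = c * bil M u w.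
Proof. by rewrite /bil -scalemxAr -scalemxAl e00Z. Qed.
Lemma bilMN (M : 'M[R]_n) u w : bil (- M) u w = - bil M u w.
Proof. by rewrite -scaleN1r bilMZ mulN1r. Qed.

Lemma quadQ (A0 P0 : 'M[R]_n) (K : 'rV[R]_n) (mu w : R)
   (x : 'cV[R]_n) (d : R) :
  quad (Qmat A0 P0 K mu w) (col_mx x d%:M) =
  - (bil P0 (A0 *m x) x + bil P0 x (A0 *m x)) + (2 * mu + w) * (sc K x) ^+ 2
  - 2 * (mu + w) * sc K x * d + w * d ^+ 2.
Proof.
rewrite /Qmat quad_block bilMD bilMZ bil_KK /S0 bilMN bilMD.
rewrite [bil (_ *m A0) _ _]/bil bil_mul [bil (A0^T *m _) _ _]/bil bil_trmul.
rewrite -scalemxAr e00Z -scalemxAl e00Z -trmx_mul tr11 -/(sc K x).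
ring.
Qed.
End Q.

Lemma quad_tr (R : realType) (n : nat) (P0 A0 : 'M[R]_n) x :
  P0^T = P0 -> bil P0 (A0 *m x) x = bil P0 x (A0 *m x).
Proof. by move=> Ps; rewrite bil_tr Ps. Qed.

Lemma part1 (R : realType) (n : nat) (ub lb : R)
    (A0 : 'M[R]_n) (B : 'cV[R]_n) (K : 'rV[R]_n) (h : R) (P0 : 'M[R]_n) (mu : R) x :
  0 < ub -> 0 < lb ->
  P0^T = P0 ->
  P0 *m B - h *: (A0^T *m K^T) = mu *: K^T ->
      dirderivable (Vfun ub lb h P0 K) x (field ub lb A0 B K x) /\
      dirder (Vfun ub lb h P0 K) x (field ub lb A0 B K x) =
        - (1/2) * quad (Qmat A0 P0 K mu (omega h K B)) (zvec ub lb K x).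
Proof.
move=> hu hl Ps Hm.
have [D1 D2] := @Vfun_der R n ub lb h P0 K x (field ub lb A0 B K x) hu hl.
split => //; rewrite D2 /zvec quadQ.
have PB : P0 *m B = mu *: K^T + h *: (A0^T *m K^T).
  by rewrite -Hm subrK.
have HB : bil P0 x B = h * sc K (A0 *m x) + mu * sc K x.
  rewrite /bil -mulmxA PB mulmxDr -!scalemxAr e00D !e00Z.
  rewrite mulmxA -!trmx_mul !tr11 /sc; ring.
rewrite (bil_tr _ _ P0 (field _ _ _ _ _ _)) Ps quad_tr //.
rewrite /field /omega bilDr bilNr bilZr HB scD scN scZ.
rewrite /dz; set sg := sat ub lb (sc K x); ring.
Qed.

Lemma quadMB (R : realType) m (M N : 'M[R]_m) z : quad (M - N) z = quad M z - quad N z.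
Proof. by rewrite /quad mulmxBr mulmxBl e00D e00N. Qed.
Lemma quadMZ (R : realType) m c (M : 'M[R]_m) z : quad (c *: M) z = c * quad M z.
Proof. by rewrite /quad -scalemxAr -scalemxAl e00Z. Qed.

Theorem lemma2 (R : realType) (n : nat) (ub lb : R)
    (A0 : 'M[R]_n) (B : 'cV[R]_n) (K : 'rV[R]_n) (h : R) (P0 : 'M[R]_n) (mu : R) :
  0 < ub -> 0 < lb ->
  P0^T = P0 ->
  P0 *m B - h *: (A0^T *m K^T) = mu *: K^T ->
  0 <= mu ->
  0 < 2 * mu + omega h K B ->
  (forall x : 'cV[R]_n,
      dirderivable (Vfun ub lb h P0 K) x (field ub lb A0 B K x) /\
      dirder (Vfun ub lb h P0 K) x (field ub lb A0 B K x) =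
        - (1/2) * quad (Qmat A0 P0 K mu (omega h K B)) (zvec ub lb K x)) /\
  (psd P0 -> psd (- (A0^T *m P0 + P0 *m A0)) -> ker_sub P0 A0 ->
   exists T0 Rr : R, 0 <= T0 /\ 0 < Rr /\
     psd ((1/2) *: Qmat A0 P0 K mu (omega h K B) - Sigma0 K T0 - SigmaR K Rr) /\
     (forall x : 'cV[R]_n,
        - dirder (Vfun ub lb h P0 K) x (field ub lb A0 B K x)
          >= Rr * (sat ub lb (sc K x)) ^+ 2)).
Proof.
move=> hu hl Ps Hm mu0 Hw.
have P1 := fun x => @part1 R n ub lb A0 B K h P0 mu x hu hl Ps Hm.
split => // _ HS _.
have HSx : forall x, 0 <= - (bil P0 (A0 *m x) x + bil P0 x (A0 *m x)).
  move=> x; have := HS x; rewrite /quad -/(bil _ _ _) bilMN bilMD.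
  by rewrite [bil (_ *m A0) _ _]/bil bil_mul [bil (A0^T *m _) _ _]/bil bil_trmul.
exists (mu / 2), (mu + omega h K B / 2); split; first by lra.
split; first by lra.
split.
  move=> z.
  rewrite -[z](@vsubmxK _ n 1) (mx11_scalar (dsubmx z)).
  set x := usubmx z; set d := dsubmx z ord0 ord0.
  rewrite !quadMB quadMZ quadQ /Sigma0 /SigmaR !quad_block.
  rewrite !mul_mx_scalar !mul_scalar_mx !mulmxN !mulNmx -!scalemxAr -!scalemxAl.
  rewrite !e00N !e00Z -trmx_mul tr11 -/(sc K x) bilMZ bil_KK.
  have -> : bil 0 x x = 0 by rewrite /bil mulmx0 mul0mx mxE.
  have := HSx x; move: (bil P0 (A0 *m x) x + bil P0 x (A0 *m x)) => a Ha.
  rewrite /omega in Hw *; nra.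
move=> x; have [_ ->] := P1 x; rewrite /zvec quadQ.
have := HSx x; move: (bil P0 (A0 *m x) x + bil P0 x (A0 *m x)) => a Ha.
have := @dz_cases R ub lb (sc K x) hu hl.
move: (sc K x) => s.
move: (omega h K B) Hw => w Hw.
move=> [[a1 [-> ->]]|[[/andP [a1 a2] [-> ->]]|[a1 [-> ->]]]].
- have a2 : 0 <= - (s + lb) by lra.
  have := mulr_ge0 mu0 (mulr_ge0 a2 (ltW hl)); nra.
- nra.
- have a2 : 0 <= s - ub by lra.
  have := mulr_ge0 mu0 (mulr_ge0 a2 (ltW hu)); nra.
Qed.
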